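(* For every integer $d\ge0$ and every integer $a\ge\max(2,2d-1)$, there exists a constructible $6$-labeled graph $H_{d,a}$ in which half of the vertices have label $1$ and half have label $2$, such that (i) $|V(H_{d,a})|\le 8a^d-6$, and (ii) for every partial orientation $\vec{G}$ of $H_{d,a}$ of maximum outdegree less than $d$, there exist vertices $u$ and $v$ of labels $1$ and $2$ respectively, at distance exactly two in $H_{d,a}$, such that for every common neighbor $x$ of $u$ and $v$ we have $(u,x)\notin E(\vec{G})$ and $(v,x)\notin E(\vec{G})$.
   Context: All graphs are finite, simple and undirected. A partial orientation of a graph $G$ is a directed graph $\vec{G}$ on $V(G)$ such that every $(u,v)\in E(\vec{G})$ satisfies $uv\in E(G)$ (each edge may be directed in neither, one, or both directions). A $k$-labeled graph is a graph in which each vertex receives a label from $[k]$ (labels may repeat, not all need be used). The constructible $k$-labeled graphs are the smallest family such that: every one-vertex $k$-labeled graph is constructible; the disjoint union of at least two constructible $k$-labeled graphs is constructible; if $G'$ is constructible and $i,j\in[k]$, the graph obtained by changing all labels $i$ to $j$ is constructible; and if $G'$ is constructible and $i,j\in[k]$, the graph obtained by adding all edges between vertices with labels $i$ and $j$ is constructible. *)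

(* Defs.v *)
From mathcomp Require Import all_boot.
Set Implicit Arguments. Unset Strict Implicit. Unset Printing Implicit Defensive.

(* A k-labeled graph: a finite vertex type T, an adjacency relation e
   (symmetric, irreflexive -- guaranteed for constructible graphs), and a
   labeling T -> 'I_k.  Label i : 'I_k stands for the paper's label i+1. *)

Definition sum_rel (T1 T2 : finType) (e1 : rel T1) (e2 : rel T2) : rel (T1 + T2) :=
  fun x y => match x, y with
             | inl a, inl b => e1 a b
             | inr a, inr b => e2 a b
             | _, _ => false
             end.

Definition sum_lab (k : nat) (T1 T2 : finType) (l1 : T1 -> 'I_k) (l2 : T2 -> 'I_k)
  : T1 + T2 -> 'I_k :=
  fun x => match x with inl a => l1 a | inr b => l2 b end.

Definition relabel (k : nat) (T : finType) (l : T -> 'I_k) (i j : 'I_k) : T -> 'I_k :=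
  fun x => if l x == i then j else l x.

Definition add_edges (k : nat) (T : finType) (e : rel T) (l : T -> 'I_k) (i j : 'I_k)
  : rel T :=
  fun x y => e x y || ((x != y) &&
              (((l x == i) && (l y == j)) || ((l x == j) && (l y == i)))).

Definition lgraph_iso (k : nat) (T1 T2 : finType) (e1 : rel T1) (l1 : T1 -> 'I_k)
  (e2 : rel T2) (l2 : T2 -> 'I_k) (f : T1 -> T2) : Prop :=
  bijective f /\ (forall x y, e2 (f x) (f y) = e1 x y) /\ (forall x, l2 (f x) = l1 x).

Inductive constructible (k : nat) : forall T : finType, rel T -> (T -> 'I_k) -> Prop :=
| cons_single (i : 'I_k) :
    constructible (fun _ _ : unit => false) (fun _ : unit => i)
| cons_union (T1 T2 : finType) (e1 : rel T1) (l1 : T1 -> 'I_k)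
    (e2 : rel T2) (l2 : T2 -> 'I_k) :
    constructible e1 l1 -> constructible e2 l2 ->
    constructible (sum_rel e1 e2) (sum_lab l1 l2)
| cons_relabel (T : finType) (e : rel T) (l : T -> 'I_k) (i j : 'I_k) :
    constructible e l -> constructible e (relabel l i j)
| cons_join (T : finType) (e : rel T) (l : T -> 'I_k) (i j : 'I_k) :
    constructible e l -> constructible (add_edges e l i j) l
| cons_iso (T1 T2 : finType) (e1 : rel T1) (l1 : T1 -> 'I_k)
    (e2 : rel T2) (l2 : T2 -> 'I_k) (f : T1 -> T2) :
    constructible e1 l1 -> lgraph_iso e1 l1 e2 l2 f -> constructible e2 l2.

(* partial orientation of the graph (T, e): a directed relation o with
   o x y -> e x y (edges may be oriented in none, one or both directions) *)
Definition partial_orientation (T : finType) (e : rel T) (o : rel T) : Prop :=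
  forall x y, o x y -> e x y.

Definition outdeg (T : finType) (o : rel T) (x : T) : nat := #|[set y | o x y]|.

Definition dist2 (T : finType) (e : rel T) (u v : T) : Prop :=
  u != v /\ ~~ e u v /\ exists x, e u x && e x v.

(* Main.v *)
Require Import Defs.
From mathcomp Require Import all_boot zify.

Definition L (k : nat) (H : k < 6) : 'I_6 := Ordinal H.
Notation L0 := (@L 0 isT). Notation L1 := (@L 1 isT).
Notation L2 := (@L 2 isT). Notation L3 := (@L 3 isT).
Notation L4 := (@L 4 isT). Notation L5 := (@L 5 isT).
Lemma inordL k (H : k < 6) : inord k = @L k H. Proof. by apply/val_inj; rewrite /= inordK. Qed.

Lemma cards_sum (A B : finType) (P : pred (A + B)) :
  #|[set x | P x]| = #|[set a | P (inl a)]| + #|[set b | P (inr b)]|.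
Proof.
rewrite -!sum1_card big_sumType; congr (_ + _); apply: eq_bigl => x; by rewrite !inE.
Qed.

Lemma cards_prod n (Y : finType) (P : pred Y) :
  #|[set p : 'I_n * Y | P p.2]| = n * #|[set y | P y]|.
Proof.
have -> : [set p : 'I_n * Y | P p.2] = setX setT [set y | P y].
  by apply/setP => -[i y]; rewrite !inE.
by rewrite cardsX cardsT card_ord.
Qed.

Lemma cards_unit (b : bool) : #|[set u : unit | b]| = b.
Proof. case: b; first by rewrite cardsT card_unit. by rewrite -[RHS](cards0 unit); congr #|_|; apply/setP=> u; rewrite !inE. Qed.

Lemma cons_ext k (T : finType) (e e2 : rel T) (l l2 : T -> 'I_k) :
  constructible e l -> (forall x y, e2 x y = e x y) -> (forall x, l2 x = l x) ->
  constructible e2 l2.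
Proof.
move=> c he hl; apply: (@cons_iso _ _ _ e l e2 l2 id c); split; last by split.
by exists id.
Qed.

Definition prod_rel (n : nat) (Y : finType) (e : rel Y) : rel ('I_n * Y) :=
  fun p q => (p.1 == q.1) && e p.2 q.2.

Lemma cons_copies (Y : finType) (e : rel Y) (l : Y -> 'I_6) m :
  constructible e l -> constructible (@prod_rel m.+1 Y e) (fun p => l p.2).
Proof.
move=> c; elim: m => [|m IH].
- apply: (@cons_iso _ _ _ e l _ _ (fun y => (ord0, y)) c); split.
  + exists snd => // -[i y] /=; by rewrite (ord1 i).
  + split => // x y /=; by rewrite /prod_rel /= eqxx.
- have cu := cons_union c IH.
  pose f (z : Y + ('I_m.+1 * Y)) : 'I_m.+2 * Y :=
    match z with inl y => (ord0, y) | inr (i, y) => (lift ord0 i, y) end.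
  pose g (p : 'I_m.+2 * Y) : Y + ('I_m.+1 * Y) :=
    match unlift ord0 p.1 with None => inl p.2 | Some j => inr (j, p.2) end.
  apply: (@cons_iso _ _ _ _ _ _ _ f cu); split.
  + exists g.
    * case=> [y|[i y]]; rewrite /g /f /=; [by rewrite unlift_none | by rewrite liftK].
    * case=> i y; rewrite /g /f /=; case: unliftP => [j ->|->] //.
  + split.
    * case=> [y|[i y]] [y'|[i' y']]; rewrite /f /prod_rel /= ?eqxx //.
      all: try by rewrite (negbTE (neq_lift _ _)).
      all: try by rewrite eq_sym (negbTE (neq_lift _ _)).
    * by case=> [y|[i y]].
Qed.

Lemma add_edgesE k (T : finType) (e : rel T) (l : T -> 'I_k) i j x y : i != j ->
  add_edges e l i j x y =
  e x y || (((l x == i) && (l y == j)) || ((l x == j) && (l y == i))).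
Proof.
move=> ij; rewrite /add_edges; case: (x =P y) => [->|] //=.
by case: (l y =P i) => [->|]; rewrite ?(negbTE ij) ?andbF //=.
Qed.

Section Step.
Variables (n : nat) (T' : finType) (e' : rel T') (l' : T' -> 'I_6).
Hypothesis hl : forall s, l' s = L0 \/ l' s = L1.

Definition Y : finType := (T' + (unit + unit))%type.
Definition TT : finType := (('I_n.+1 * Y) + (unit + unit))%type.

Definition eS : rel TT := fun x y =>
  match x, y with
  | inl (i, inl s), inl (j, inl t) => (i == j) && e' s t
  | inl (i, inl s), inl (j, inr (inl _)) => (i == j) && (l' s == L0)
  | inl (j, inr (inl _)), inl (i, inl s) => (i == j) && (l' s == L0)
  | inl (i, inl s), inl (j, inr (inr _)) => (i == j) && (l' s == L1)
  | inl (j, inr (inr _)), inl (i, inl s) => (i == j) && (l' s == L1)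
  | inr (inl _), inl (_, inr (inr _)) => true
  | inl (_, inr (inr _)), inr (inl _) => true
  | inr (inr _), inl (_, inr (inl _)) => true
  | inl (_, inr (inl _)), inr (inr _) => true
  | _, _ => false
  end.

Definition lY (y : Y) : 'I_6 :=
  match y with inl s => l' s | inr (inl _) => L1 | inr (inr _) => L0 end.
Definition lS (x : TT) : 'I_6 :=
  match x with inl (_, y) => lY y | inr (inl _) => L0 | inr (inr _) => L1 end.

Definition e0 := sum_rel (fun _ _ : unit => false) (fun _ _ : unit => false).
Definition lp := sum_lab (fun _ : unit => L2) (fun _ : unit => L3).

Lemma cons_step : constructible e' l' -> constructible eS lS.
Proof.
move=> c.
have c0 : constructible e0 lp by apply: cons_union; apply: cons_single.
have cY := cons_relabel L3 L5 (cons_relabel L2 L4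
             (cons_join L1 L3 (cons_join L0 L2 (cons_union c c0)))).
have cP := @cons_copies _ _ _ n cY.
have cU := cons_union cP c0.
have cF := cons_relabel L3 L1 (cons_relabel L2 L0 (cons_relabel L5 L0 (cons_relabel L4 L1
             (cons_join L3 L4 (cons_join L2 L5 cU))))).
apply: (@cons_ext _ _ _ eS _ lS cF).
- move=> x y.
  case: x => [[i [s|[[]|[]]]]|[[]|[]]]; case: y => [[j [t|[[]|[]]]]|[[]|[]]];
   rewrite /= !add_edgesE // /prod_rel /= ?add_edgesE //= /relabel /=;
   try (case: (hl s) => ->); try (case: (hl t) => ->); rewrite /= ?orbF ?andbT //.
  all: try by rewrite ?andbF // eq_sym.
- case=> [[i [s|[[]|[]]]]|[[]|[]]] //=; rewrite /relabel /=.
  by case: (hl s) => ->.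
Qed.

Lemma card_TT : #|TT| = n.+1 * (#|T'| + 2) + 2.
Proof. rewrite /TT /Y card_sum card_prod card_ord !card_sum !card_unit; lia. Qed.

Lemma cnt_S (k : 'I_6) (Hk : k = L0 \/ k = L1) :
  #|[set x | lS x == k]| = n.+1 * (#|[set s | l' s == k]| + 1) + 1.
Proof.
rewrite cards_sum.
have -> : [set a : 'I_n.+1 * Y | lS (inl a) == k] = [set p | lY p.2 == k].
  by apply/setP => -[i y]; rewrite !inE.
rewrite (cards_prod _ _ (fun y => lY y == k)) !cards_sum /= !cards_unit.
by case: Hk => ->.
Qed.

Definition emb (i : 'I_n.+1) (s : T') : TT := inl (i, inl s).
Definition pp (i : 'I_n.+1) : TT := inl (i, inr (inl tt)).
Definition qq (i : 'I_n.+1) : TT := inl (i, inr (inr tt)).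
Definition us : TT := inr (inl tt).
Definition vs : TT := inr (inr tt).

Lemma orient_step (d : nat) : 2 * d.+1 - 1 <= n.+1 ->
  (forall o : rel T', partial_orientation e' o -> (forall x, outdeg o x < d) ->
    exists u v, l' u = L0 /\ l' v = L1 /\ dist2 e' u v /\
      forall x, e' u x -> e' v x -> ~~ o u x /\ ~~ o v x) ->
  (forall o : rel TT, partial_orientation eS o -> (forall x, outdeg o x < d.+1) ->
    exists u v, lS u = L0 /\ lS v = L1 /\ dist2 eS u v /\
      forall x, eS u x -> eS v x -> ~~ o u x /\ ~~ o v x).
Proof.
move=> ha IH o po od.
have qinj : injective qq by move=> i j [].
have pinj : injective pp by move=> i j [].
have einj : forall i, injective (emb i) by move=> i s t [].
have [i Hi] : exists i, ~~ o us (qq i) && ~~ o vs (pp i).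
  pose S := [set i | o us (qq i)] :|: [set i | o vs (pp i)].
  have cS1 : #|[set i | o us (qq i)]| <= d.
    have := od us; rewrite /outdeg ltnS; apply: leq_trans.
    rewrite -(card_imset _ qinj); apply: subset_leq_card.
    by apply/subsetP => y /imsetP [j]; rewrite !inE => H ->.
  have cS2 : #|[set i | o vs (pp i)]| <= d.
    have := od vs; rewrite /outdeg ltnS; apply: leq_trans.
    rewrite -(card_imset _ pinj); apply: subset_leq_card.
    by apply/subsetP => y /imsetP [j]; rewrite !inE => H ->.
  have : ~~ ([set: 'I_n.+1] \subset S).
    apply/negP => /subset_leq_card; rewrite cardsT card_ord.
    have [h _] := leq_card_setU [set i | o us (qq i)] [set i | o vs (pp i)].
    move: h; rewrite -/S => h1 h2. move: (leq_trans h1 (leq_add cS1 cS2)) => h3. move: (leq_trans h2 h3); lia.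
  case/subsetPn => i _; rewrite !inE negb_or => H; by exists i.
case/andP: Hi => Hq Hp.
case: (pickP (fun s => (l' s == L0) && ~~ o (emb i s) (pp i))) => [s /andP [Hs Ho] | H1].
  exists (emb i s), vs; split; first by apply/eqP.
  split; first by [].
  split.
    split; first by [].
    split; first by [].
    by exists (pp i); rewrite /= eqxx Hs.
  case=> [[j [t|[[]|[]]]]|[[]|[]]] //= /andP [/eqP <- _] _; by split.
case: (pickP (fun s => (l' s == L1) && ~~ o (emb i s) (qq i))) => [s /andP [Hs Ho] | H2].
  exists us, (emb i s); split; first by [].
  split; first by apply/eqP.
  split.
    split; first by [].
    split; first by [].
    by exists (qq i); rewrite /= eqxx Hs.
  case=> [[j [t|[[]|[]]]]|[[]|[]]] //= _ /andP [/eqP <- _]; by split.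
pose o' : rel T' := fun s t => o (emb i s) (emb i t).
have [||u [v [Hu [Hv [[ne [nadj [x Hx]]] Hc]]]]] := IH o'.
- move=> s t /po; by rewrite /= eqxx.
- move=> s; have := od (emb i s); rewrite /outdeg ltnS; apply: leq_trans.
  pose w := if l' s == L0 then pp i else qq i.
  have wo : o (emb i s) w.
    rewrite /w; case: (hl s) => e.
      by move: (H1 s); rewrite /= e /=; case: (o _ _).
    by move: (H2 s); rewrite /= e /=; case: (o _ _).
  have nw : w \notin emb i @: [set y | o' s y].
    by apply/imsetP => -[t _]; rewrite /w; case: (l' s == L0).
  have -> : (#|[set y | o' s y]|).+1 = #|w |: (emb i @: [set y | o' s y])|.
    by rewrite cardsU1 nw (card_imset _ (einj i)).
  apply: subset_leq_card; apply/subsetP => y; rewrite !inE.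
  case/predU1P => [->|/imsetP [t]]; first exact: wo.
  by rewrite inE => h ->.
exists (emb i u), (emb i v); split; first by [].
split; first by [].
split.
  split; first by rewrite (inj_eq (einj i)).
  split; first by rewrite /= eqxx.
  by exists (emb i x); rewrite /= eqxx.
case=> [[j [t|[[]|[]]]]|[[]|[]]] /=.
- move=> /andP [/eqP <- h1] /andP [_ h2]; exact: Hc.
- by rewrite Hv andbF.
- by rewrite Hu andbF.
- by [].
- by [].
Qed.
End Step.

Lemma main a d : 2 <= a -> 2 * d - 1 <= a ->
  exists (T : finType) (e : rel T) (l : T -> 'I_6),
    constructible e l /\
    #|[set x | l x == L0]| * 2 = #|T| /\
    #|[set x | l x == L1]| * 2 = #|T| /\
    #|T| <= 8 * a ^ d - 6 /\
    (forall o : rel T, partial_orientation e o ->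
       (forall x, outdeg o x < d) ->
       exists u v, l u = L0 /\ l v = L1 /\ dist2 e u v /\
         forall x, e u x -> e v x -> ~~ o u x /\ ~~ o v x).
Proof.
case: a => [|n] // a2; elim: d => [|d IH] hd.
  exists ((unit + unit)%type : finType), (sum_rel (fun _ _ : unit => false) (fun _ _ : unit => false)),
    (sum_lab (fun _ : unit => L0) (fun _ : unit => L1)).
  split; first by apply: cons_union; apply: cons_single.
  rewrite card_sum !card_unit !cards_sum /= !cards_unit /=.
  split; first by [].
  split; first by [].
  split; first by rewrite expn0.
  by move=> o _ od; have := od (inl tt).
have hd' : 2 * d - 1 <= n.+1 by lia.
have [T' [e' [l' [c [c0 [c1 [sz P]]]]]]] := IH hd'.
have hl : forall s, l' s = L0 \/ l' s = L1.
  have AB : [set x | l' x == L0] :|: [set x | l' x == L1] = setT.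
    apply/eqP; rewrite eqEcard subsetT cardsT cardsU.
    have -> : [set x | l' x == L0] :&: [set x | l' x == L1] = set0.
      by apply/setP => x; rewrite !inE; case: eqP => // ->.
    rewrite cards0; lia.
  move=> s; have : s \in [set x | l' x == L0] :|: [set x | l' x == L1] by rewrite AB inE.
  by rewrite !inE => /orP [/eqP ->|/eqP ->]; [left|right].
exists (TT n T'), (eS n T' e' l'), (lS n T' l').
split; first exact: cons_step.
rewrite card_TT !cnt_S; [|by right|by left].
split; first nia.
split; first nia.
split.
  rewrite expnS; have A1 : 0 < n.+1 ^ d by rewrite expn_gt0.
  move: A1 sz; set A := n.+1 ^ d => A1 sz; nia.
exact: orient_step.
Qed.

Theorem lemma32 (d a : nat) :
  maxn 2 (2 * d - 1) <= a ->
  exists (T : finType) (e : rel T) (l : T -> 'I_6),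
    constructible e l /\
    #|[set x | l x == inord 0]| * 2 = #|T| /\
    #|[set x | l x == inord 1]| * 2 = #|T| /\
    #|T| <= 8 * a ^ d - 6 /\
    (forall o : rel T, partial_orientation e o ->
       (forall x, outdeg o x < d) ->
       exists u v, l u = inord 0 /\ l v = inord 1 /\ dist2 e u v /\
         forall x, e u x -> e v x -> ~~ o u x /\ ~~ o v x).
Proof.
rewrite geq_max => /andP [h1 h2].
rewrite (@inordL 0 isT) (@inordL 1 isT).
exact: main.
Qed.
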